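(* For each integer $n\ge0$ let $\theta^\Delta_n(x)=\sum_{k=0}^n\frac{(n+k)!}{2^k(n-k)!\,k!}(x)_{n-k}$, where $(x)_j=x(x-1)\cdots(x-j+1)$ and $(x)_0=1$. Then for every $n\ge0$ and every $x\in\mathbb{C}$, \[ \theta^\Delta_{n+2}(x)-(2n+3)\theta^\Delta_{n+1}(x)-x(x-1)\theta^\Delta_n(x-2)=0 . \] *)

(* Defs.v *)
From mathcomp Require Import all_boot all_order all_algebra.
From mathcomp Require Import Rstruct.
From mathcomp Require Import complex.
Set Implicit Arguments. Unset Strict Implicit. Unset Printing Implicit Defensive.
Import GRing.Theory Num.Theory.
Local Open Scope ring_scope.

Definition C := complex Rdefinitions.R.

Definition falling (x : C) (j : nat) : C := \prod_(i < j) (x - i%:R).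

Definition thetaD (n : nat) (x : C) : C :=
  \sum_(k < n.+1)
    (((n + k)`!)%:R / ((2 ^ k)%:R * ((n - k)`!)%:R * (k`!)%:R)) * falling x (n - k).

(* Main.v *)
Require Import Defs.
From mathcomp Require Import all_boot all_order all_algebra.
From mathcomp Require Import Rstruct.
From mathcomp Require Import complex.
From mathcomp Require Import ring lra zify.
Import GRing.Theory Num.Theory.
Local Open Scope ring_scope.

Definition cc (n k : nat) : C :=
  ((n + k)`!)%:R / ((2 ^ k)%:R * ((n - k)`!)%:R * (k`!)%:R).

Lemma natC_neq0 (m : nat) : (0 < m)%N -> (m%:R : C) != 0.
Proof. by move=> h; rewrite pnatr_eq0 -lt0n. Qed.

Lemma fallingSS (x : C) j : x * (x - 1) * falling (x - 2) j = falling x j.+2.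
Proof.
rewrite /falling !big_ord_recl /= subr0 mulrA; congr (_ * _).
apply: eq_bigr => i _; rewrite /bump /= !mulrS; ring.
Qed.

Lemma cc_mid m k : cc (m + k + 1).+2 k.+1 =
  (2 * (m + k + 1) + 3)%:R * cc (m + k + 1).+1 k + cc (m + k + 1) k.+1.
Proof.
rewrite /cc.
have -> : ((m + k + 1).+2 - k.+1 = m.+2)%N by lia.
have -> : ((m + k + 1).+1 - k = m.+2)%N by lia.
have -> : ((m + k + 1) - k.+1 = m)%N by lia.
have -> : ((m + k + 1).+2 + k.+1 = (2*k + m + 2).+2)%N by lia.
have -> : ((m + k + 1).+1 + k = (2*k + m + 2))%N by lia.
have -> : ((m + k + 1) + k.+1 = (2*k + m + 2))%N by lia.
rewrite !factS expnS !natrM.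
have h1 := @natC_neq0 _ (fact_gt0 (2 * k + m + 2)).
have h2 := @natC_neq0 _ (fact_gt0 m).
have h3 := @natC_neq0 _ (fact_gt0 k).
have h4 : ((2 ^ k)%N%:R : C) != 0 by apply: natC_neq0; rewrite expn_gt0.
have h5 : ((m.+1)%:R : C) != 0 by apply: natC_neq0.
have h6 : ((m.+2)%:R : C) != 0 by apply: natC_neq0.
have h7 : ((k.+1)%:R : C) != 0 by apply: natC_neq0.
rewrite ?natrD ?natrM /=.
field; by rewrite -[2 + _]natrD !nat1r !pnatr_eq0 -!lt0n !fact_gt0 expn_gt0.
Qed.

Lemma cc_0 n : cc n 0 = 1.
Proof.
rewrite /cc addn0 subn0 expn0 fact0 mul1r mulr1 divff //.
by rewrite pnatr_eq0 -lt0n fact_gt0.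
Qed.

Lemma cc_e1 n : cc n.+2 n.+1 = (2 * n + 3)%:R * cc n.+1 n.
Proof.
rewrite /cc.
have -> : (n.+2 - n.+1 = 1)%N by lia.
have -> : (n.+1 - n = 1)%N by lia.
have -> : (n.+2 + n.+1 = (2 * n + 1).+2)%N by lia.
have -> : (n.+1 + n = (2 * n + 1))%N by lia.
rewrite !factS expnS fact0 !natrM.
have h1 := @natC_neq0 _ (fact_gt0 (2 * n + 1)).
have h3 := @natC_neq0 _ (fact_gt0 n).
have h4 : ((2 ^ n)%N%:R : C) != 0 by apply: natC_neq0; rewrite expn_gt0.
rewrite ?natrD ?natrM /=.
field; by rewrite !nat1r !pnatr_eq0 -!lt0n !fact_gt0 expn_gt0.
Qed.

Lemma cc_e2 n : cc n.+2 n.+2 = (2 * n + 3)%:R * cc n.+1 n.+1.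
Proof.
rewrite /cc !subnn fact0.
have -> : (n.+2 + n.+2 = (2 * n + 2).+2)%N by lia.
have -> : (n.+1 + n.+1 = (2 * n + 2))%N by lia.
rewrite !factS expnS !natrM.
have h1 := @natC_neq0 _ (fact_gt0 (2 * n + 2)).
have h3 := @natC_neq0 _ (fact_gt0 n).
have h4 : ((2 ^ n)%N%:R : C) != 0 by apply: natC_neq0; rewrite expn_gt0.
rewrite ?natrD ?natrM /=.
field; by rewrite -?[2 + _]natrD !nat1r !pnatr_eq0 -!lt0n !fact_gt0 expn_gt0.
Qed.

Lemma cc_mid' n j : (j < n)%N -> cc n.+2 j.+1 =
  (2 * n + 3)%:R * cc n.+1 j + cc n j.+1.
Proof.
move=> h; have -> : n = (n - j.+1 + j + 1)%N by lia.
exact: cc_mid.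
Qed.

Lemma thE m y : thetaD m y = \sum_(k < m.+1) cc m k * falling y (m - k).
Proof. by []. Qed.

Theorem mainTheorem13 (n : nat) (x : C) :
  thetaD n.+2 x - (2 * n + 3)%:R * thetaD n.+1 x
    - x * (x - 1) * thetaD n (x - 2) = 0.
Proof.
rewrite !thE.
pose F := falling x.
have E1 : \sum_(k < n.+3) cc n.+2 k * falling x (n.+2 - k) =
   F n.+2 + \sum_(k < n) cc n.+2 k.+1 * F (n.+1 - k)%N
   + cc n.+2 n.+1 * F 1%N + cc n.+2 n.+2 * F 0%N.
  rewrite big_ord_recl cc_0 mul1r subn0 !big_ord_recr /= /bump /= subnn !addrA.
  congr (_ + _ + _ + _); rewrite add1n; congr (_ * falling x _); lia.
  all: try (congr (_ * falling x _); lia).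
have E2 : \sum_(k < n.+2) cc n.+1 k * falling x (n.+1 - k) =
   \sum_(k < n) cc n.+1 k * F (n.+1 - k)%N
   + cc n.+1 n * F 1%N + cc n.+1 n.+1 * F 0%N.
  rewrite !big_ord_recr /= subnn.
  by rewrite (_ : (n.+1 - n = 1)%N) //; lia.
have E3 : x * (x - 1) * \sum_(k < n.+1) cc n k * falling (x - 2) (n - k) =
   F n.+2 + \sum_(k < n) cc n k.+1 * F (n.+1 - k)%N.
  rewrite big_ord_recl cc_0 mul1r subn0 mulrDr fallingSS mulr_sumr; congr (_ + _).
  apply: eq_bigr => i _; rewrite mulrCA fallingSS; congr (_ * _).
  rewrite /F; congr (falling x _); rewrite lift0; have := ltn_ord i; lia.
rewrite E1 E2 E3 cc_e1 cc_e2.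
have -> : \sum_(k < n) cc n.+2 k.+1 * F (n.+1 - k)%N =
  (2 * n + 3)%:R * \sum_(k < n) cc n.+1 k * F (n.+1 - k)%N
  + \sum_(k < n) cc n k.+1 * F (n.+1 - k)%N.
  rewrite mulr_sumr -big_split /=; apply: eq_bigr => i _.
  rewrite cc_mid' ?ltn_ord //; ring.
ring.
Qed.
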